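(* If $p<2q$, then $\rho(\mathcal{L}_\omega(\widehat{\mathcal{T}_{p/q}}))=\rho(\mathcal{L}_\omega(\mathcal{T}_{p/q}))$, where $\mathcal{L}_\omega(\mathcal{X})$ denotes the set of infinite words accepted by the automaton $\mathcal{X}$ and $\rho$ is applied elementwise.
   Context: Let $p>q>1$ be coprime integers, $A_p=\{0,\dots,p-1\}$ and $B=\{p-(2q-1),\dots,p-1\}$. For $n\in\mathbb{N}$ and $a\in\mathbb{Z}$, let $\tau(n,a)=\frac{np+a}{q}$, defined only when $q$ divides $np+a$. Let $\mathcal{T}_{p/q}$ (resp. $\widehat{\mathcal{T}_{p/q}}$) be the deterministic automaton with state set $\mathbb{N}$, alphabet $A_p$ (resp. $B$), initial state $0$, and transitions $n\xrightarrow{a}\tau(n,a)$ for $a$ in the alphabet with $\tau(n,a)$ defined. An infinite word is accepted if each of its finite prefixes labels a path starting at $0$. For an infinite word $a_1a_2\cdots$ of integers, $\rho(a_1a_2\cdots)=\sum_{i\ge 1} a_i\left(\frac{p}{q}\right)^{-i}$. *)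

(* Defs.v *)
From Stdlib Require Import ZArith Reals.
Open Scope Z_scope.

Definition alphA (p : Z) (a : Z) : Prop := 0 <= a <= p - 1.

Definition alphB (p q : Z) (a : Z) : Prop := p - (2 * q - 1) <= a <= p - 1.

(* Infinite words are w : nat -> Z, with w i the letter a_{i+1}.
   The automaton T with alphabet [alph] has state set N, initial state 0 and
   transitions n --a--> tau(n,a) = (n p + a)/q, defined when q | n p + a
   (and the value is a state, i.e. in N). Since the automaton is deterministic,
   "every finite prefix labels a path from 0" is equivalent to the existence of
   the (unique) infinite run s : nat -> Z with s 0 = 0 and
   s (i+1) = tau(s i, w i). *)
Definition accepted (p q : Z) (alph : Z -> Prop) (w : nat -> Z) : Prop :=
  exists s : nat -> Z,
    s 0%nat = 0 /\
    forall i : nat,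
      alph (w i) /\ 0 <= s (S i) /\ q * s (S i) = s i * p + w i.

(* rho(a_1 a_2 ...) = sum_{i>=1} a_i (p/q)^{-i}, as a relation "the series
   converges to x". *)
Definition rho_is (p q : Z) (w : nat -> Z) (x : R) : Prop :=
  infinite_sum (fun i : nat => (IZR (w i) * (IZR q / IZR p) ^ (S i))%R) x.

Definition rho_lang (p q : Z) (alph : Z -> Prop) (x : R) : Prop :=
  exists w : nat -> Z, accepted p q alph w /\ rho_is p q w x.

(* Main.v *)
Require Import Defs.
From Stdlib Require Import ZArith Reals.
From Stdlib Require Import Lia Lra Psatz Classical ClassicalEpsilon.

Open Scope Z_scope.

Lemma min_exists (g : nat -> Z) : (forall j, 0 <= g j) -> exists j0, forall j, g j0 <= g j.
Proof.
  intros Hg. apply NNPP; intro Hn.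
  assert (H: forall n : nat, forall j, (Z.to_nat (g j) <= n)%nat -> False).
  { induction n as [|n IH]; intros j Hj.
    - apply Hn. exists j. intros j'. pose proof (Hg j'). pose proof (Hg j). lia.
    - destruct (classic (forall j', g j <= g j')) as [Hm|Hm].
      + apply Hn; exists j; auto.
      + apply not_all_ex_not in Hm. destruct Hm as [j' Hj'].
        apply (IH j'). pose proof (Hg j'). lia. }
  exact (H _ 0%nat (le_n _)).
Qed.

Lemma B_to_A p q s w : 1 < q -> q < p -> p < 2*q -> s 0%nat = 0 ->
  (forall i, alphB p q (w i) /\ 0 <= s (S i) /\ q * s (S i) = s i * p + w i) ->
  exists r : nat -> Z, r 0%nat = 0 /\ (forall i, 0 <= r i /\ r i <= s i /\
     (p-q)*(s i - r i) <= 2*q-2 /\ p * r i <= q * r (S i) < p * r i + p).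
Proof.
  intros Hq Hqp Hp2 Hs0 Hs.
  set (pi := fun n => q*n/p).
  assert (pi_spec : forall n, p * pi n <= q*n < p * pi n + p).
  { intro n. unfold pi. pose proof (Z.div_mod (q*n) p ltac:(lia)).
    pose proof (Z.mod_pos_bound (q*n) p ltac:(lia)). lia. }
  assert (pi_mono : forall n m, n <= m -> pi n <= pi m).
  { intros n m Hnm. pose proof (pi_spec n). pose proof (pi_spec m).
    generalize dependent (pi n). generalize dependent (pi m). intros. nia. }
  assert (pi_nn : forall n, 0 <= n -> 0 <= pi n).
  { intros n Hn. pose proof (pi_spec n). generalize dependent (pi n). intros. nia. }
  assert (Snn : forall k, 0 <= s k).
  { intros [|k]. lia. apply (Hs k). }
  assert (pi_s : forall k, pi (s (S k)) <= s k).
  { intro k. pose proof (pi_spec (s (S k))). destruct (Hs k) as [[_ Hb] [_ He]].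
    generalize dependent (pi (s (S k))). intros. nia. }
  assert (iter_nn : forall j n, 0 <= n -> 0 <= Nat.iter j pi n).
  { induction j; intros n Hn; simpl; auto. }
  assert (iter_mono : forall j n m, n <= m -> Nat.iter j pi n <= Nat.iter j pi m).
  { induction j; intros n m Hnm; simpl; auto. }
  set (h := fun k j => Nat.iter j pi (s (k+j)%nat)).
  assert (h_nn : forall k j, 0 <= h k j).
  { intros; unfold h; auto. }
  assert (h_step : forall k j, h k (S j) = pi (h (S k) j)).
  { intros k j. unfold h. rewrite Nat.add_succ_r. reflexivity. }
  assert (h_dec : forall k j, h k (S j) <= h k j).
  { intros k j. unfold h. rewrite Nat.iter_succ_r. apply iter_mono.
    rewrite Nat.add_succ_r. apply pi_s. }
  assert (h_dec_le : forall k j j', (j <= j')%nat -> h k j' <= h k j).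
  { intros k j j' Hj. induction Hj. lia. pose proof (h_dec k m). lia. }
  assert (h_low : forall j k, (p-q)*(s k - h k j) <= 2*q-2).
  { induction j; intro k.
    - unfold h; cbn [Nat.iter]. rewrite Nat.add_0_r, Z.sub_diag, Z.mul_0_r. lia.
    - rewrite h_step. pose proof (IHj (S k)). pose proof (pi_spec (h (S k) j)).
      destruct (Hs k) as [[Hb _] [_ He]].
      generalize dependent (pi (h (S k) j)). generalize dependent (h (S k) j).
      intros y H1 z H2.
      assert (p*(s k - z) <= q*(s (S k) - y) + 2*q - 2) by lia.
      assert (A1 : (p-q)*(p*(s k - z)) <= (p-q)*(q*(s (S k) - y) + 2*q - 2))
        by (apply Z.mul_le_mono_nonneg_l; lia).
      assert (A2 : q*((p-q)*(s (S k) - y)) <= q*(2*q-2))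
        by (apply Z.mul_le_mono_nonneg_l; lia).
      assert (p*((p-q)*(s k - z)) <= p*(2*q-2)) by lia.
      apply (Z.mul_le_mono_pos_l _ _ p); lia. }
  assert (Hex : forall k, exists j0, forall j, h k j0 <= h k j).
  { intro k. apply min_exists. auto. }
  destruct (choice _ Hex) as [j0 Hj0].
  exists (fun k => h k (j0 k)). split.
  - pose proof (Hj0 0%nat 0%nat). pose proof (h_nn 0%nat (j0 0%nat)).
    unfold h at 2 in H. simpl in H. lia.
  - intro i.
    assert (Hr : h i (j0 i) = pi (h (S i) (j0 (S i)))).
    { set (J' := Nat.max (j0 (S i)) (j0 i)).
      pose proof (h_dec_le i (j0 i) (S J') ltac:(lia)).
      pose proof (Hj0 i (S J')).
      pose proof (h_dec_le (S i) (j0 (S i)) J' ltac:(lia)).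
      pose proof (Hj0 (S i) J').
      rewrite h_step in *. assert (h (S i) J' = h (S i) (j0 (S i))) by lia.
      rewrite H3 in *. lia. }
    split; [auto|]. split.
    { pose proof (Hj0 i 0%nat). unfold h at 2 in H. simpl in H.
      rewrite Nat.add_0_r in H. lia. }
    split. apply h_low.
    rewrite Hr. apply pi_spec.
Qed.

Open Scope R_scope.

Lemma partial_sum p q s w : IZR p <> 0 ->
  (forall i, (q * s (S i) = s i * p + w i)%Z) -> forall n,
  sum_f_R0 (fun i => IZR (w i) * (IZR q / IZR p)^(S i)) n =
  IZR q * IZR (s (S n)) * (IZR q / IZR p)^(S n) - IZR q * IZR (s 0%nat).
Proof.
  intros Hp Hs.
  assert (E : forall i, IZR (w i) = IZR q * IZR (s (S i)) - IZR (s i) * IZR p).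
  { intro i. rewrite <- mult_IZR, <- mult_IZR, <- minus_IZR. f_equal. rewrite (Hs i). ring. }
  induction n.
  - simpl. rewrite E. field. auto.
  - rewrite tech5, IHn, E. simpl. field. auto.
Qed.

Theorem mainTheorem12 (p q : Z) :
  (1 < q)%Z -> (q < p)%Z -> Z.gcd p q = 1%Z -> (p < 2 * q)%Z ->
  forall x : R, rho_lang p q (alphB p q) x <-> rho_lang p q (alphA p) x.
Proof.
  intros Hq Hqp _ Hp2 x. split.
  - intros [w [[s [Hs0 Hs]] Hrho]].
    destruct (B_to_A p q s w Hq Hqp Hp2 Hs0 Hs) as [r [Hr0 Hr]].
    set (w' := fun i => (q * r (S i) - r i * p)%Z).
    assert (Hrun : forall i, (q * r (S i) = r i * p + w' i)%Z).
    { intro i; unfold w'; lia. }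
    exists w'. split.
    { exists r. split; auto. intro i. destruct (Hr i) as [_ [_ [_ Hb]]].
      destruct (Hr (S i)) as [Hn _]. unfold alphA, w'. lia. }
    assert (Hp : IZR p <> 0) by (apply not_0_IZR; lia).
    assert (Hrho2 : 0 < IZR q / IZR p < 1).
    { split. apply Rdiv_lt_0_compat; apply IZR_lt; lia.
      apply (Rmult_lt_reg_r (IZR p)). apply IZR_lt; lia.
      unfold Rdiv; rewrite Rmult_assoc, Rinv_l, Rmult_1_r; auto. rewrite Rmult_1_l; apply IZR_lt; lia. }
    assert (Hs' : forall i, (q * s (S i) = s i * p + w i)%Z) by (intro i; apply Hs).
    unfold rho_is, infinite_sum in *. intros eps He.
    assert (HqR : 2 <= IZR q) by (apply IZR_le; lia).
    destruct (Hrho (eps/2)) as [N1 H1]. lra.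
    destruct (pow_lt_1_zero (IZR q / IZR p) ltac:(rewrite Rabs_pos_eq; lra)
                (eps / (4 * IZR q * IZR q)) ltac:(apply Rdiv_lt_0_compat; nra)) as [N2 H2].
    exists (Nat.max N1 N2). intros n Hn.
    specialize (H1 n ltac:(lia)). specialize (H2 (S n) ltac:(lia)).
    unfold R_dist in *.
    rewrite (partial_sum p q r w' Hp Hrun n).
    rewrite (partial_sum p q s w Hp Hs' n) in H1.
    rewrite Hr0 in *. rewrite Hs0 in H1.
    destruct (Hr (S n)) as [_ [Hle [Hlow _]]].
    assert (HD : (0 <= s (S n) - r (S n) <= 2 * q)%Z) by nia.
    set (u := (IZR q / IZR p)^(S n)) in *.
    assert (Hu : 0 < u) by (apply pow_lt; lra).
    rewrite Rabs_pos_eq in H2 by lra.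
    assert (HD' : 0 <= IZR (s (S n)) - IZR (r (S n)) <= 2 * IZR q).
    { rewrite <- minus_IZR. split. apply IZR_le; lia.
      replace (2 * IZR q) with (IZR (2*q)) by (rewrite mult_IZR; reflexivity).
      apply IZR_le; lia. }
    set (D := IZR (s (S n)) - IZR (r (S n))) in *.
    assert (Hu2 : u * (4 * IZR q * IZR q) < eps).
    { apply (Rmult_lt_compat_r (4 * IZR q * IZR q)) in H2; [|nra].
      replace (eps / (4 * IZR q * IZR q) * (4 * IZR q * IZR q)) with eps in H2 by (field; nra). exact H2. }
    assert (Hc : IZR q * D * u <= IZR q * (2 * IZR q) * u).
    { apply Rmult_le_compat_r; [lra|]. apply Rmult_le_compat_l; lra. }
    assert (Hc0 : 0 <= IZR q * D * u).
    { apply Rmult_le_pos; [|lra]. apply Rmult_le_pos; lra. }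
    replace (IZR q * IZR (r (S n)) * u - IZR q * 0 - x)
      with ((IZR q * IZR (s (S n)) * u - IZR q * 0 - x) - IZR q * D * u)
      by (unfold D; ring).
    apply Rabs_def2 in H1. apply Rabs_def1; lra.
  - intros [w [[s [Hs0 Hs]] Hrho]]. exists w. split; auto.
    exists s. split; auto. intro i. destruct (Hs i) as [Ha Hb].
    split; auto. unfold alphA, alphB in *. lia.
Qed.
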